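(* Let $\Gamma$ be a reduct of $(\mathbb{Z};<)$ in which $\mathrm{suc}$ is primitive positive definable. Then $<$ is primitive positive definable in $\Gamma$ if and only if some one-sided infinite binary relation is primitive positive definable in $\Gamma$.
   Context: A reduct of $(\mathbb{Z};<)$ is a relational structure with domain $\mathbb{Z}$ whose relations are first-order definable in $(\mathbb{Z};<)$. $\mathrm{suc}=\{(x,y)\in\mathbb{Z}^2:y=x+1\}$. A binary relation $R$ first-order definable in $(\mathbb{Z};<)$ is one-sided infinite if there exist integers $c\le d$ such that for all $x\in\mathbb{Z}$: $(x,x+z)\notin R$ for every $z<c$, and $(x,x+z)\in R$ for every $z\ge d$. *)

(* Defs.v *)
From Stdlib Require Import ZArith List.
Import ListNotations.
Open Scope Z_scope.

Definition env := nat -> Z.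
Definition upd (e : env) (x : nat) (z : Z) : env :=
  fun i => if Nat.eqb i x then z else e i.

Inductive fo : Type :=
| FLt (i j : nat)
| FEq (i j : nat)
| FNot (p : fo)
| FAnd (p q : fo)
| FEx (x : nat) (p : fo).

Fixpoint fo_sat (e : env) (p : fo) : Prop :=
  match p with
  | FLt i j => e i < e j
  | FEq i j => e i = e j
  | FNot p => ~ fo_sat e p
  | FAnd p q => fo_sat e p /\ fo_sat e q
  | FEx x p => exists z, fo_sat (upd e x z) p
  end.

(* An n-ary relation on Z is represented as a predicate on lists of length n. *)
Definition relation_of_arity (n : nat) (R : list Z -> Prop) : Prop :=
  forall t, R t -> length t = n.

(* phi defines the n-ary relation R, with free variables 0..n-1
   (truth of phi may not depend on the values of other variables). *)
Definition defines {F : Type} (sat : env -> F -> Prop) (n : nat) (phi : F)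
  (R : list Z -> Prop) : Prop :=
  relation_of_arity n R /\
  forall (t : list Z) (e : env), length t = n ->
    (forall i, (i < n)%nat -> e i = nth i t 0) ->
    (R t <-> sat e phi).

Definition fo_definable (n : nat) (R : list Z -> Prop) : Prop :=
  exists phi : fo, defines fo_sat n phi R.

(* A reduct of (Z;<): a relational structure on Z, with arbitrary index set of
   relation symbols, each interpreted by a relation first-order definable in (Z;<). *)
Record reduct : Type := mkReduct {
  rI : Type;
  rar : rI -> nat;
  rrel : rI -> list Z -> Prop;
  rrel_arity : forall r, relation_of_arity (rar r) (rrel r);
  rrel_fo : forall r, fo_definable (rar r) (rrel r)
}.

Inductive pp (I : Type) : Type :=
| PTrue
| PEq (i j : nat)
| PAtom (r : I) (vs : list nat)
| PAnd (p q : pp I)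
| PEx (x : nat) (p : pp I).
Arguments PTrue {I}.
Arguments PEq {I} i j.
Arguments PAtom {I} r vs.
Arguments PAnd {I} p q.
Arguments PEx {I} x p.

Fixpoint pp_sat (G : reduct) (e : env) (p : pp (rI G)) : Prop :=
  match p with
  | PTrue => True
  | PEq i j => e i = e j
  | PAtom r vs => rrel G r (map e vs)
  | PAnd p q => pp_sat G e p /\ pp_sat G e q
  | PEx x p => exists z, pp_sat G (upd e x z) p
  end.

Fixpoint pp_wf (G : reduct) (p : pp (rI G)) : Prop :=
  match p with
  | PTrue => True
  | PEq _ _ => True
  | PAtom r vs => length vs = rar G r
  | PAnd p q => pp_wf G p /\ pp_wf G q
  | PEx _ p => pp_wf G p
  end.

Definition pp_definable (G : reduct) (n : nat) (R : list Z -> Prop) : Prop :=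
  exists phi : pp (rI G), pp_wf G phi /\ defines (pp_sat G) n phi R.

Definition lt_rel (t : list Z) : Prop := exists x y, t = [x; y] /\ x < y.
Definition suc_rel (t : list Z) : Prop := exists x, t = [x; x + 1].

Definition one_sided_infinite (R : list Z -> Prop) : Prop :=
  relation_of_arity 2 R /\ fo_definable 2 R /\
  exists c d : Z, c <= d /\
    forall x : Z,
      (forall z, z < c -> ~ R [x; x + z]) /\
      (forall z, d <= z -> R [x; x + z]).

(* Main.v *)
Require Import Defs.
From Stdlib Require Import ZArith List Lia Classical FunctionalExtensionality.
Import ListNotations.
Open Scope Z_scope.

Definition rel2 (P : Z -> Z -> Prop) (t : list Z) : Prop :=
  exists x y, t = [x; y] /\ P x y.

Definition pp_def2 (G : reduct) (P : Z -> Z -> Prop) := pp_definable G 2 (rel2 P).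

Lemma rel2_iff P a b : rel2 P [a; b] <-> P a b.
Proof.
  split; [intros (x&y&Ht&Hp); injection Ht; intros; subst; auto | intros; exists a, b; auto].
Qed.

Lemma def2 G (phi : pp (rI G)) P :
  defines (pp_sat G) 2 phi (rel2 P) -> forall e, pp_sat G e phi <-> P (e 0%nat) (e 1%nat).
Proof.
  intros [_ H] e.
  specialize (H [e 0%nat; e 1%nat] e eq_refl).
  rewrite <- rel2_iff. symmetry. apply H.
  intros i Hi. destruct i as [|[|i]]; simpl; auto; lia.
Qed.

Lemma mk2 G (phi : pp (rI G)) P :
  pp_wf G phi -> (forall e, pp_sat G e phi <-> P (e 0%nat) (e 1%nat)) -> pp_def2 G P.
Proof.
  intros Hw H. exists phi; split; auto; split.
  - intros t (x&y&->&_); reflexivity.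
  - intros t e Hl He.
    destruct t as [|a [|b [|]]]; simpl in Hl; try discriminate.
    rewrite H, (He 0%nat), (He 1%nat) by lia. simpl. apply rel2_iff.
Qed.

Lemma pp2_ext G P Q : pp_def2 G P -> (forall x y, P x y <-> Q x y) -> pp_def2 G Q.
Proof.
  intros [phi [Hw Hd]] H. apply (mk2 G phi); auto.
  intros e. rewrite (def2 G phi P Hd). apply H.
Qed.

Lemma pp2_eq G : pp_def2 G (fun x y => x = y).
Proof. apply (mk2 G (PEq 0%nat 1%nat)); simpl; tauto. Qed.

Lemma pp2_and G P Q : pp_def2 G P -> pp_def2 G Q -> pp_def2 G (fun x y => P x y /\ Q x y).
Proof.
  intros [phi [Hw Hd]] [psi [Hw' Hd']]. apply (mk2 G (PAnd phi psi)); simpl; auto.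
  intros e. rewrite (def2 G phi P Hd), (def2 G psi Q Hd'). tauto.
Qed.

Fixpoint rn {I} (f : nat -> nat) (p : pp I) : pp I :=
  match p with
  | PTrue => PTrue
  | PEq i j => PEq (f i) (f j)
  | PAtom r vs => PAtom r (map f vs)
  | PAnd p q => PAnd (rn f p) (rn f q)
  | PEx x p => PEx (f x) (rn f p)
  end.

Lemma rn_wf G f (p : pp (rI G)) : pp_wf G p -> pp_wf G (rn f p).
Proof.
  induction p; simpl; auto.
  - rewrite length_map; auto.
  - tauto.
Qed.

Lemma rn_sat G f (Hf : forall a b, f a = f b -> a = b) (p : pp (rI G)) :
  forall e, pp_sat G e (rn f p) <-> pp_sat G (fun i => e (f i)) p.
Proof.
  induction p; intros e; simpl.
  - tauto.
  - tauto.
  - rewrite map_map. tauto.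
  - rewrite IHp1, IHp2. tauto.
  - split; intros [z Hz]; exists z; [rewrite IHp in Hz|rewrite IHp];
    (replace (fun i => upd e (f x) z (f i)) with (upd (fun i => e (f i)) x z) in *;
     [assumption|]);
    apply functional_extensionality; intros i; unfold upd;
    destruct (Nat.eqb_spec i x), (Nat.eqb_spec (f i) (f x)); subst; auto;
    exfalso; auto.
Qed.

Definition rho (a b : nat) (i : nat) : nat :=
  match i with O => a | S O => b | S (S k) => (k + 4)%nat end.

Lemma rho_inj a b : a <> b -> (a < 4)%nat -> (b < 4)%nat ->
  forall x y, rho a b x = rho a b y -> x = y.
Proof.
  intros Hab Ha Hb x y. destruct x as [|[|x]], y as [|[|y]]; simpl; lia.
Qed.

Lemma pp2_conv G P : pp_def2 G P -> pp_def2 G (fun x y => P y x).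
Proof.
  intros [phi [Hw Hd]]. apply (mk2 G (rn (rho 1%nat 0%nat) phi)); [apply rn_wf; auto|].
  intros e. rewrite rn_sat by (apply rho_inj; lia).
  rewrite (def2 G phi P Hd). simpl. tauto.
Qed.

Lemma pp2_comp G P Q : pp_def2 G P -> pp_def2 G Q ->
  pp_def2 G (fun x z => exists y, P x y /\ Q y z).
Proof.
  intros [phi [Hw Hd]] [psi [Hw' Hd']].
  apply (mk2 G (PEx 2%nat (PAnd (rn (rho 0%nat 2%nat) phi) (rn (rho 2%nat 1%nat) psi)))).
  { simpl; split; apply rn_wf; auto. }
  intros e. simpl. split; intros [z Hz]; exists z.
  - rewrite !rn_sat in Hz by (apply rho_inj; lia).
    rewrite (def2 G phi P Hd), (def2 G psi Q Hd') in Hz. simpl in Hz.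
    unfold upd in Hz; simpl in Hz. exact Hz.
  - rewrite !rn_sat by (apply rho_inj; lia).
    rewrite (def2 G phi P Hd), (def2 G psi Q Hd'). simpl.
    unfold upd; simpl. exact Hz.
Qed.

Lemma ppd_ext G n A B : (forall t, A t <-> B t) -> pp_definable G n A -> pp_definable G n B.
Proof.
  intros HAB [phi [Hw [Har Hd]]]. exists phi; split; auto; split.
  - intros t Ht. apply Har, HAB, Ht.
  - intros t e Hl He. rewrite <- HAB. apply Hd; auto.
Qed.

Lemma pp2_of G R : relation_of_arity 2 R -> pp_definable G 2 R ->
  pp_def2 G (fun x y => R [x; y]).
Proof.
  intros Ha H. refine (ppd_ext _ _ _ _ _ H).
  intros t. split.
  - intros Ht. pose proof (Ha t Ht) as Hl.
    destruct t as [|a [|b [|]]]; simpl in Hl; try discriminate. exists a, b; auto.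
  - intros (x&y&->&Hr); auto.
Qed.

Lemma pp2_shift_nat G : pp_def2 G (fun x y => y = x + 1) ->
  forall n : nat, pp_def2 G (fun x y => y = x + Z.of_nat n).
Proof.
  intros Hs n. induction n.
  - eapply pp2_ext; [apply pp2_eq|]. intros; simpl; lia.
  - eapply pp2_ext; [apply (pp2_comp _ _ _ IHn Hs)|].
    intros x y; split; [intros [w [H1 H2]]; lia|intros H; exists (x + Z.of_nat n); lia].
Qed.

Lemma pp2_shift G : pp_def2 G (fun x y => y = x + 1) ->
  forall k : Z, pp_def2 G (fun x y => y = x + k).
Proof.
  intros Hs k. destruct (Z_le_gt_dec 0 k).
  - eapply pp2_ext; [apply (pp2_shift_nat G Hs (Z.to_nat k))|]. intros x y; simpl; split; intros; lia.
  - eapply pp2_ext; [apply pp2_conv, (pp2_shift_nat G Hs (Z.to_nat (-k)))|]. intros x y; simpl; split; intros; lia.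
Qed.

Lemma fo_shift p : forall e k, fo_sat e p <-> fo_sat (fun i => e i + k) p.
Proof.
  induction p; intros e k; simpl.
  - lia.
  - lia.
  - rewrite (IHp e k). tauto.
  - rewrite (IHp1 e k), (IHp2 e k). tauto.
  - split; intros [z Hz].
    + exists (z + k). rewrite (IHp _ k) in Hz.
      replace (fun i => upd e x z i + k) with (upd (fun i => e i + k) x (z + k)) in Hz; auto.
      apply functional_extensionality; intros i; unfold upd; destruct (Nat.eqb i x); auto.
    + exists (z - k). rewrite (IHp _ k).
      replace (fun i => upd e x (z - k) i + k) with (upd (fun i => e i + k) x z); auto.
      apply functional_extensionality; intros i; unfold upd; destruct (Nat.eqb i x); auto; lia.
Qed.

Definition e2 (a b : Z) : env := fun i => match i with 0%nat => a | _ => b end.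

Lemma fo_inv R : fo_definable 2 R -> forall a b k, R [a; b] <-> R [a + k; b + k].
Proof.
  intros [phi [_ Hd]] a b k.
  rewrite (Hd [a; b] (e2 a b)) by (auto; intros [|[|i]] Hi; simpl; auto; lia).
  rewrite (Hd [a + k; b + k] (e2 (a + k) (b + k))) by (auto; intros [|[|i]] Hi; simpl; auto; lia).
  rewrite (fo_shift phi (e2 a b) k).
  replace (fun i => e2 a b i + k) with (e2 (a + k) (b + k)); [tauto|].
  apply functional_extensionality; intros [|i]; reflexivity.
Qed.

Lemma largest_gap (D : Z -> Prop) d :
  (forall z, d <= z -> D z) -> forall z0, ~ D z0 ->
  exists g, ~ D g /\ forall w, g < w -> D w.
Proof.
  intros Hd.
  assert (forall m : nat, forall z, ~ D z -> d - z <= Z.of_nat m ->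
    exists g, ~ D g /\ forall w, g < w -> D w).
  { induction m; intros z Hz Hm.
    - exfalso. apply Hz, Hd. lia.
    - destruct (classic (exists w, z < w /\ ~ D w)) as [[w [Hw1 Hw2]]|Hn].
      + apply (IHm w Hw2). assert (w < d) by (destruct (Z_lt_le_dec w d); auto;
          exfalso; apply Hw2, Hd; lia). lia.
      + exists z; split; auto. intros w Hw. apply NNPP. intros Hw'. apply Hn; eauto. }
  intros z0 Hz0. apply (H (Z.to_nat (d - z0)) z0 Hz0). lia.
Qed.


Lemma pp2_big G (Hs : pp_def2 G (fun x y => y = x + 1)) P a : pp_def2 G P ->
  forall n : nat, pp_def2 G (fun x y => forall j : nat, (j <= n)%nat -> P x (y + a + Z.of_nat j)).
Proof.
  intros HP.
  assert (Hone : forall k, pp_def2 G (fun x y => P x (y + k))).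
  { intros k. eapply pp2_ext; [apply (pp2_comp _ _ _ HP (pp2_shift G Hs (-k)))|].
    intros x y; split; [intros [w [H1 H2]]; replace (y + k) with w by lia; auto
                       |intros H; exists (y + k); split; auto; lia]. }
  induction n.
  - eapply pp2_ext; [apply (Hone a)|]. intros x y; split.
    + intros H j Hj. replace j with 0%nat by lia. simpl. rewrite Z.add_0_r; auto.
    + intros H. specialize (H 0%nat (le_n _)). simpl in H. rewrite Z.add_0_r in H; auto.
  - eapply pp2_ext; [apply (pp2_and _ _ _ IHn (Hone (a + Z.of_nat (S n))))|].
    intros x y; split.
    + intros [H1 H2] j Hj. destruct (Nat.eq_dec j (S n)).
      * subst. rewrite <- Z.add_assoc. auto.
      * apply H1. lia.
    + intros H. split.
      * intros j Hj. apply H. lia.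
      * rewrite Z.add_assoc. apply H. lia.
Qed.

Theorem mainTheorem13 (G : reduct) :
  pp_definable G 2 suc_rel ->
  (pp_definable G 2 lt_rel <->
   exists R : list Z -> Prop, one_sided_infinite R /\ pp_definable G 2 R).
Proof.
  intros Hsuc.
  assert (Hs : pp_def2 G (fun x y => y = x + 1)).
  { destruct Hsuc as [phi [Hw [Har Hd]]]. exists phi; split; auto; split.
    - intros t (x&y&->&_); reflexivity.
    - intros t e Hl He. rewrite <- (Hd t e Hl He). split.
      + intros (x&y&->&->). exists x; auto.
      + intros [x ->]. exists x, (x + 1); auto. }
  split.
  - intros Hlt. exists lt_rel. split; auto.
    split; [intros t (x&y&->&_); reflexivity|].
    split.
    + exists (FLt 0%nat 1%nat). split; [intros t (x&y&->&_); reflexivity|].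
      intros t e Hl He. destruct t as [|a [|b [|]]]; simpl in Hl; try discriminate.
      simpl. rewrite (He 0%nat), (He 1%nat) by lia. simpl.
      split; [intros (x&y&Ht&Hxy); injection Ht; intros; subst; auto|intros; exists a, b; auto].
    + exists 1, 1. split; [lia|]. intros x; split.
      * intros z Hz (a&b&Ht&Hab). injection Ht; intros; subst; lia.
      * intros z Hz. exists x, (x + z). split; auto; lia.
  - intros [R [[Har [Hfo [c [d [Hcd Hcd']]]]] HR]].
    set (D := fun z => R [0; z]).
    assert (HD : forall x y, R [x; y] <-> D (y - x)).
    { intros x y. unfold D. rewrite (fo_inv R Hfo x y (- x)).
      replace (x + - x) with 0 by lia. replace (y + - x) with (y - x) by lia. tauto. }
    assert (Hlow : forall z, z < c -> ~ D z).
    { intros z Hz H. apply (proj1 (Hcd' 0) z Hz). exact H. }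
    assert (Hhigh : forall z, d <= z -> D z).
    { intros z Hz. apply (proj2 (Hcd' 0) z Hz). }
    destruct (largest_gap D d Hhigh (c - 1) (Hlow (c - 1) ltac:(lia))) as [g [Hg Hg']].
    assert (Hgc : c <= g - 0 \/ True) by auto.
    assert (Hgd : g < d) by (destruct (Z_lt_le_dec g d); auto; exfalso; apply Hg, Hhigh; lia).
    set (N := Z.to_nat (d - c)).
    pose proof (pp2_big G Hs _ g (pp2_of G R Har HR) N) as Hb.
    refine (ppd_ext _ _ _ _ _ (pp2_ext _ _ (fun x y => x < y) Hb _)).
    + intros t; split; [intros (x&y&->&H); exists x, y; auto|intros (x&y&->&H); exists x, y; auto].
    + intros x y. split.
      * intros H. apply NNPP; intros Hxy.
        destruct (Z_le_gt_dec (y - x + g + Z.of_nat N) g).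
        -- assert (Hcw : c <= y - x + g).
           { destruct (Z_lt_le_dec (y - x + g) c); auto. exfalso.
             specialize (H 0%nat ltac:(lia)). rewrite HD in H. apply (Hlow _ l0).
             replace (y + g + Z.of_nat 0 - x) with (y - x + g) in H by lia. auto. }
           unfold N in l. lia.
        -- specialize (H (Z.to_nat (g - (y - x + g))) ltac:(unfold N in *; lia)).
           rewrite HD in H. apply Hg.
           replace g with (y + g + Z.of_nat (Z.to_nat (g - (y - x + g))) - x) by lia. auto.
      * intros H j Hj. rewrite HD. apply Hg'. lia.
Qed.
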